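(* Let $\varepsilon>0$ and $\delta\in(0,1)$, and set $p=1-e^{-\varepsilon}$ and $k=\left\lceil\frac{1}{\varepsilon}\ln\left(\frac{e^{\varepsilon}+2\delta-1}{(e^{\varepsilon}+1)\delta}\right)\right\rceil$. Let $f$ be an integer-valued query on databases with sensitivity $1$ (i.e. $|f(D)-f(D')|\le1$ whenever $D'$ is obtained from $D$ by adding or removing one user). The truncated geometric mechanism, which on input $D$ outputs $f(D)+X$ with $X$ drawn from the $k$-truncated symmetric geometric distribution with parameter $p$, is $(\varepsilon,\delta)$-differentially private.
   Context: For $p\in(0,1)$ and an integer $k\ge1$, the $k$-truncated symmetric geometric distribution ($k$-TSGD) with parameter $p$ is the distribution on $\mathbb{Z}$ with $\Pr[X=x]=c\,(1-p)^{|x|}$ for $x\in[-k,k]\cap\mathbb{Z}$ and $0$ otherwise, where $c=\frac{p}{1+(1-p)-2(1-p)^{k+1}}$. A randomized mechanism $\mathcal{M}$ is $(\varepsilon,\delta)$-differentially private if for any databases $D,D'$ where $D'$ is obtained from $D$ by adding or removing one user, and all sets $S$ of outputs, $\Pr[\mathcal{M}(D)\in S]\le e^{\varepsilon}\Pr[\mathcal{M}(D')\in S]+\delta$. *)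

(* Defs.v *)
From HB Require Import structures.
From mathcomp Require Import all_boot all_order all_algebra.
From mathcomp Require Import all_classical all_reals.
From mathcomp Require Import all_analysis.
Set Implicit Arguments. Unset Strict Implicit. Unset Printing Implicit Defensive.
Import Order.TTheory GRing.Theory Num.Theory.
Local Open Scope ring_scope.
Local Open Scope classical_set_scope.

Definition tsgd_c {R : realType} (p : R) (k : nat) : R :=
  p / (1 + (1 - p) - 2 * (1 - p) ^+ k.+1).

Definition tsgd_pmf {R : realType} (p : R) (k : nat) (x : int) : R :=
  if (`|x| <= k)%N then tsgd_c p k * (1 - p) ^+ `|x| else 0.

(* Pr[f(D) + X \in S]; X is supported on [-k, k], enumerated as i - k, i < 2k+1 *)
Definition tgm_prob {R : realType} (p : R) (k : nat) (fD : int) (S : set int) : R :=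
  \sum_(i < (k + k).+1)
     (if (fD + (i%:Z - k%:Z)) \in S then tsgd_pmf p k (i%:Z - k%:Z) else 0).

(* Databases are finite multisets (sequences up to permutation) of users in U;
   D' is a neighbour of D if it is obtained by adding or removing one user. *)
Definition neighbour {U : eqType} (D D' : seq U) : Prop :=
  exists u : U, perm_eq D' (u :: D) \/ perm_eq D (u :: D').

Definition tgm_dp {R : realType} {U : eqType} (f : seq U -> int) (p : R) (k : nat)
  (eps delta : R) : Prop :=
  forall D D' : seq U, neighbour D D' ->
  forall S : set int,
    tgm_prob p k (f D) S <= expR eps * tgm_prob p k (f D') S + delta.

(* Main.v *)
Require Import Defs.
From HB Require Import structures.
From mathcomp Require Import all_boot all_order all_algebra.
From mathcomp Require Import all_classical all_reals.
From mathcomp Require Import all_analysis.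
From mathcomp Require Import lra zify.
Import Order.TTheory GRing.Theory Num.Theory.
Local Open Scope ring_scope.


Lemma absz_aux1 (n k : nat) : (`|n%:Z - k%:Z| <= `|n.+1%:Z - k%:Z|.+1)%N.
Proof. lia. Qed.
Lemma absz_aux2 (n k : nat) : (`|n.+1%:Z - k%:Z| <= `|n%:Z - k%:Z|.+1)%N.
Proof. lia. Qed.
Lemma absz_aux3 (n k : nat) : (n < k + k)%N -> (`|n%:Z - k%:Z| <= k)%N.
Proof. lia. Qed.
Lemma absz_aux4 (n k : nat) : (n < k + k)%N -> (`|n.+1%:Z - k%:Z| <= k)%N.
Proof. lia. Qed.

Section Aux.
Variables (R : realType) (eps : R) (k : nat).
Hypothesis heps : 0 < eps.
Let q := expR (- eps).
Let p := 1 - q.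

Lemma q_gt0 : 0 < q. Proof. exact: expR_gt0. Qed.
Lemma q_lt1 : q < 1.
Proof. by rewrite /q expR_lt1 oppr_lt0. Qed.

Lemma den_gt0 : 0 < 1 + (1 - p) - 2 * (1 - p) ^+ k.+1.
Proof.
have -> : 1 - p = q by rewrite /p; lra.
have h : q ^+ k.+1 <= q.
  by rewrite -[leRHS]expr1; apply: ler_wiXn2l; [exact: ltW q_gt0|exact: ltW q_lt1|].
have := q_lt1; lra.
Qed.

Lemma c_ge0 : 0 <= tsgd_c p k.
Proof.
rewrite /tsgd_c; apply: divr_ge0; last exact: ltW den_gt0.
have := q_lt1; rewrite /p; lra.
Qed.

Lemma pmf_ge0 x : 0 <= tsgd_pmf p k x.
Proof.
rewrite /tsgd_pmf; case: ifP => // _.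
apply: mulr_ge0; first exact: c_ge0.
apply: exprn_ge0; rewrite /p; have := q_gt0; lra.
Qed.

Lemma pmf_shift (x y : int) : (`|y| <= `|x|.+1)%N -> (`|y| <= k)%N ->
  tsgd_pmf p k x <= expR eps * tsgd_pmf p k y.
Proof.
move=> hxy hy; rewrite /tsgd_pmf hy.
case: ifP => hx; last first.
  apply: mulr_ge0; first exact: ltW (expR_gt0 _).
  apply: mulr_ge0; first exact: c_ge0.
  apply: exprn_ge0; rewrite /p; have := q_gt0; lra.
have -> : 1 - p = q by rewrite /p; lra.
rewrite mulrCA ler_wpM2l //; first exact: c_ge0.
have hq : expR eps = q^-1 by rewrite /q expRN invrK.
rewrite hq ler_pdivlMl; last exact: q_gt0.
rewrite -exprS; apply: ler_wiXn2l; [exact: ltW q_gt0|exact: ltW q_lt1|].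
by [].
Qed.


Lemma ck_le (delta : R) : 0 < delta < 1 ->
  k%:Z = Num.ceil (ln ((expR eps + 2 * delta - 1) / ((expR eps + 1) * delta)) / eps) ->
  tsgd_c p k * (1 - p) ^+ k <= delta.
Proof.
move=> /andP[hd0 hd1] hk.
have hq1 : 1 - p = q by rewrite /p; lra.
rewrite hq1.
set e := expR eps.
have he : e * q = 1 by rewrite /e /q expRxMexpNx_1.
have he1 : 1 < e by rewrite /e expR_gt1.
set A := e + 2 * delta - 1.
set B := (e + 1) * delta.
have hA : 0 < A by rewrite /A; lra.
have hB : 0 < B by rewrite /B; apply: mulr_gt0 => //; lra.
have hL : ln (A / B) <= k%:R * eps.
  have := ceil_ge (ln (A / B) / eps); rewrite -hk.
  by rewrite ler_pdivrMr // => h; rewrite mulrC.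
have hqk : q ^+ k * A <= B.
  have : q ^+ k <= B / A.
    rewrite /q -expRM_natl.
    have -> : B / A = expR (- ln (A / B)).
      by rewrite expRN lnK ?invf_div // posrE divr_gt0.
    rewrite ler_expR; lra.
  by rewrite ler_pdivlMr.
rewrite /tsgd_c hq1 mulrAC ler_pdivrMr; last by have := den_gt0; rewrite hq1.
rewrite exprS.
have hq0 := q_gt0.
have hX : 0 <= q ^+ k by apply: exprn_ge0; lra.
have h2 : q * (q ^+ k * A) <= q * B by rewrite ler_pM2l.
rewrite /A /B in h2.
have -> : p = 1 - q by rewrite /p; lra.
nra.
Qed.


Lemma tgm_ge0 a S : 0 <= tgm_prob p k a S.
Proof. by apply: sumr_ge0 => i _; case: ifP => // _; apply: pmf_ge0. Qed.

Lemma step_up (a b : int) S (delta : R) :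
  tsgd_c p k * (1 - p) ^+ k <= delta -> b = a + 1 ->
  tgm_prob p k a S <= expR eps * tgm_prob p k b S + delta.
Proof.
move=> hck hb.
rewrite /tgm_prob big_ord_recl [X in _ <= _ * X + _]big_ord_recr.
have h1 : (if a + ((@ord0 (k+k))%:Z - k%:Z) \in S then tsgd_pmf p k ((@ord0 (k+k))%:Z - k%:Z) else 0) <= delta.
  case: ifP => _; last by apply: le_trans hck; apply: mulr_ge0; [exact: c_ge0|
    apply: exprn_ge0; rewrite /p; have := q_gt0; lra].
  rewrite /tsgd_pmf.
  have -> : `|((@ord0 (k+k))%:Z - k%:Z)|%N = k by rewrite sub0r abszN absz_nat.
  by rewrite leqnn.
have h3 : 0 <= expR eps * (if b + ((@ord_max (k + k))%:Z - k%:Z) \in S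
     then tsgd_pmf p k ((@ord_max (k + k))%:Z - k%:Z) else 0).
  apply: mulr_ge0; first exact: ltW (expR_gt0 _).
  by case: ifP => // _; apply: pmf_ge0.
have h2 : \sum_(i < k + k) (if a + ((lift ord0 i)%:Z - k%:Z) \in S
      then tsgd_pmf p k ((lift ord0 i)%:Z - k%:Z) else 0) <=
    expR eps * \sum_(i < k + k) (if b + ((widen_ord (leqnSn (k + k)) i)%:Z - k%:Z) \in S
      then tsgd_pmf p k ((widen_ord (leqnSn (k + k)) i)%:Z - k%:Z) else 0).
  rewrite mulr_sumr; apply: ler_sum => i _.
  rewrite lift0 /=.
  have hi := ltn_ord i.
  have -> : a + (i.+1%:Z - k%:Z) = b + (i%:Z - k%:Z) by rewrite hb; lia.
  case: ifP => _; last by rewrite mulr0.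
  apply: pmf_shift; [exact: absz_aux1 | exact: absz_aux3].
move: h1 h2 h3; rewrite mulrDr; lra.
Qed.


Lemma step_down (a b : int) S (delta : R) :
  tsgd_c p k * (1 - p) ^+ k <= delta -> b = a - 1 ->
  tgm_prob p k a S <= expR eps * tgm_prob p k b S + delta.
Proof.
move=> hck hb.
rewrite /tgm_prob big_ord_recr [X in _ <= _ * X + _]big_ord_recl.
have h1 : (if a + ((@ord_max (k+k))%:Z - k%:Z) \in S then tsgd_pmf p k ((@ord_max (k+k))%:Z - k%:Z) else 0) <= delta.
  case: ifP => _; last by apply: le_trans hck; apply: mulr_ge0; [exact: c_ge0|
    apply: exprn_ge0; rewrite /p; have := q_gt0; lra].
  rewrite /tsgd_pmf.
  have -> : `|((@ord_max (k+k))%:Z - k%:Z)|%N = k by rewrite /=; lia.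
  by rewrite leqnn.
have h3 : 0 <= expR eps * (if b + ((@ord0 (k + k))%:Z - k%:Z) \in S
     then tsgd_pmf p k ((@ord0 (k + k))%:Z - k%:Z) else 0).
  apply: mulr_ge0; first exact: ltW (expR_gt0 _).
  by case: ifP => // _; apply: pmf_ge0.
have h2 : \sum_(i < k + k) (if a + ((widen_ord (leqnSn (k + k)) i)%:Z - k%:Z) \in S
      then tsgd_pmf p k ((widen_ord (leqnSn (k + k)) i)%:Z - k%:Z) else 0) <=
    expR eps * \sum_(i < k + k) (if b + ((lift ord0 i)%:Z - k%:Z) \in S
      then tsgd_pmf p k ((lift ord0 i)%:Z - k%:Z) else 0).
  rewrite mulr_sumr; apply: ler_sum => i _.
  rewrite lift0 /=.
  have hi := ltn_ord i.
  have -> : b + (i.+1%:Z - k%:Z) = a + (i%:Z - k%:Z) by rewrite hb; lia.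
  case: ifP => _; last by rewrite mulr0.
  apply: pmf_shift; [exact: absz_aux2 | exact: absz_aux4].
apply: le_trans (lerD h2 h1) _; move: h3; lra.
Qed.

Lemma step_eq (a : int) S (delta : R) : 0 <= delta ->
  tgm_prob p k a S <= expR eps * tgm_prob p k a S + delta.
Proof.
move=> hd; have h0 := tgm_ge0 a S.
have he : 1 <= expR eps by rewrite ltW // expR_gt1.
have : tgm_prob p k a S <= expR eps * tgm_prob p k a S by rewrite ler_peMl.
lra.
Qed.

End Aux.
Theorem theorem4 (R : realType) (U : eqType) (eps delta : R) (k : nat)
  (f : seq U -> int) :
  0 < eps -> 0 < delta < 1 ->
  k%:Z = Num.ceil (ln ((expR eps + 2 * delta - 1) / ((expR eps + 1) * delta)) / eps) ->
  (forall D D' : seq U, neighbour D D' -> `|f D - f D'| <= 1) ->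
  tgm_dp f (1 - expR (- eps)) k eps delta.
Proof.
move=> heps hd hk hf D D' hn S.
have hck := @ck_le R eps k heps delta hd hk.
have hd0 : 0 <= delta by case/andP: hd => /ltW.
have := hf D D' hn.
have [h|[h|h]] : f D' = f D + 1 \/ f D' = f D - 1 \/ f D' = f D.
  move: (hf D D' hn); move: (f D) (f D') => x y; clear; lia.
- by move=> _; apply: (@step_up R eps k heps).
- by move=> _; apply: (@step_down R eps k heps).
- by move=> _; rewrite h; apply: (@step_eq R eps k heps).
Qed.
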